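(* Let $\ell\ge 2$ and $k>\ell$ be integers. Then $\overline{\alpha}(\{1,\dots,\ell-1,k\})=\frac{1}{\ell}$ if $k\not\equiv 0\pmod{\ell}$, and $\overline{\alpha}(\{1,\dots,\ell-1,k\})=\frac{k}{\ell(k+1)}$ if $k\equiv 0\pmod{\ell}$.
   Context: For a finite set $S$ of positive integers, the distance graph $G(S)$ has vertex set $\mathbb{Z}$, with $i,j$ adjacent iff $|i-j|\in S$. The density of $A\subseteq\mathbb{Z}$ is $\delta(A)=\limsup_{N\to\infty}\frac{|A\cap[-N,N]|}{2N+1}$, and the independence ratio $\overline{\alpha}(S)$ is the supremum of $\delta(A)$ over independent sets $A$ of $G(S)$. *)

(* Defs.v *)
From Stdlib Require Import Reals ZArith List.
From Coquelicot Require Import Coquelicot.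
Open Scope R_scope.

Definition count_sym (A : Z -> bool) (N : nat) : nat :=
  List.length (List.filter (fun i : nat => A (Z.of_nat i - Z.of_nat N)%Z)
                           (List.seq 0 (2 * N + 1))).

Definition density (A : Z -> bool) : Rbar :=
  LimSup_seq (fun N => INR (count_sym A N) / INR (2 * N + 1)).

Definition independent (S : nat -> Prop) (A : Z -> bool) : Prop :=
  forall i j : Z, A i = true -> A j = true -> ~ S (Z.abs_nat (i - j)).

Definition indep_ratio (S : nat -> Prop) : Rbar :=
  Rbar_lub (fun y => exists A, independent S A /\ density A = y).

(* Main.v *)
Require Import Defs.
From Stdlib Require Import Reals Arith ZArith Lia Lra List Bool.
From Coquelicot Require Import Coquelicot.
Open Scope R_scope.
Open Scope nat_scope.

Fixpoint cnt (A : Z -> bool) (a : Z) (n : nat) : nat :=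
  match n with O => O | S n' => ((if A a then 1 else 0) + cnt A (a+1)%Z n')%nat end.

Lemma cnt_filter A z s n :
  length (filter (fun i:nat => A (Z.of_nat i - z)%Z) (seq s n)) = cnt A (Z.of_nat s - z) n.
Proof.
  revert s; induction n; intros s; simpl; auto.
  destruct (A (Z.of_nat s - z)%Z); simpl; rewrite IHn;
  replace (Z.of_nat (S s) - z)%Z with (Z.of_nat s - z + 1)%Z by lia; reflexivity.
Qed.

Lemma count_cnt A N : count_sym A N = cnt A (- Z.of_nat N) (2*N+1).
Proof.
  unfold count_sym. rewrite cnt_filter. f_equal.
Qed.

Lemma cnt_add A a n m : cnt A a (n+m) = (cnt A a n + cnt A (a + Z.of_nat n) m)%nat.
Proof.
  revert a; induction n; intros a; simpl.
  - rewrite Z.add_0_r; reflexivity.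
  - rewrite IHn. replace (a + 1 + Z.of_nat n)%Z with (a + Z.pos (Pos.of_succ_nat n))%Z by lia. lia.
Qed.

Lemma cnt_mul_le A p c : (forall a, (cnt A a p <= c)%nat) -> forall q a, (cnt A a (q*p) <= q*c)%nat.
Proof.
  intros H q; induction q; intros a; simpl; auto.
  rewrite cnt_add. specialize (H a). specialize (IHq (a + Z.of_nat p)%Z). lia.
Qed.

Lemma cnt_mul_eq A p c : (forall a, cnt A a p = c) -> forall q a, cnt A a (q*p) = (q*c)%nat.
Proof.
  intros H q; induction q; intros a; simpl; auto.
  rewrite cnt_add. rewrite H, IHq. lia.
Qed.

Lemma cnt_mono A a n m : (n <= m)%nat -> (cnt A a n <= cnt A a m)%nat.
Proof.
  intros H. replace m with (n + (m - n))%nat by lia. rewrite cnt_add. lia.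
Qed.

Lemma nat_up A p c n : (0 < p)%nat -> (forall a, (cnt A a p <= c)%nat) ->
  forall a, (cnt A a n * p <= c * (n + p))%nat.
Proof.
  intros Hp H a.
  pose proof (Nat.div_mod n p ltac:(lia)) as E.
  pose proof (Nat.mod_upper_bound n p ltac:(lia)) as M.
  set (q := n / p) in *. set (r := n mod p) in *.
  assert (cnt A a n <= (q+1)*c)%nat.
  { eapply Nat.le_trans. apply (cnt_mono A a n ((q+1)*p)). nia.
    apply cnt_mul_le; auto. }
  nia.
Qed.

Lemma nat_low A p c n : (0 < p)%nat -> (forall a, cnt A a p = c) ->
  forall a, (c * n <= cnt A a n * p + c * p)%nat.
Proof.
  intros Hp H a.
  pose proof (Nat.div_mod n p ltac:(lia)) as E.
  pose proof (Nat.mod_upper_bound n p ltac:(lia)) as M.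
  set (q := n / p) in *. set (r := n mod p) in *.
  assert (q*c <= cnt A a n)%nat.
  { rewrite <- (cnt_mul_eq A p c H q a). apply cnt_mono. nia. }
  nia.
Qed.

Open Scope R_scope.
Lemma inv_lim : is_lim_seq (fun N => / INR (2*N+1)) 0.
Proof.
  replace (Finite 0) with (Rbar_inv p_infty) by reflexivity.
  apply is_lim_seq_inv; [|discriminate].
  apply is_lim_seq_le_p_loc with INR; [|apply is_lim_seq_INR].
  exists 0%nat; intros n _. apply le_INR; lia.
Qed.

Lemma lim_aux (v w : R) : is_lim_seq (fun N => v + w * / INR (2*N+1)) v.
Proof.
  replace (Finite v) with (Finite (v + w * 0)) by (f_equal; ring).
  apply is_lim_seq_plus'. apply is_lim_seq_const.
  apply is_lim_seq_mult'. apply is_lim_seq_const. apply inv_lim.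
Qed.

Lemma pos_INR_S n : 0 < INR (2*n+1).
Proof. apply lt_0_INR; lia. Qed.

Lemma real_up (x c n p : R) : 0 < n -> 0 < p -> x * p <= c * (n + p) ->
  x / n <= c / p + c * / n.
Proof.
  intros Hn Hp H.
  apply Rmult_le_reg_r with (n * p). nra.
  replace (x / n * (n * p)) with (x * p) by (field; lra).
  replace ((c / p + c * / n) * (n * p)) with (c * (n + p)) by (field; lra).
  exact H.
Qed.

Lemma real_low (x c n p : R) : 0 < n -> 0 < p -> c * n <= x * p + c * p ->
  c / p + (- c) * / n <= x / n.
Proof.
  intros Hn Hp H.
  apply Rmult_le_reg_r with (n * p). nra.
  replace (x / n * (n * p)) with (x * p) by (field; lra).
  replace ((c / p + - c * / n) * (n * p)) with (c * n - c * p) by (field; lra).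
  lra.
Qed.

Lemma density_upper A p c : (0 < p)%nat -> (forall a, (cnt A a p <= c)%nat) ->
  Rbar_le (density A) (INR c / INR p).
Proof.
  intros Hp H. unfold density.
  replace (Finite (INR c / INR p)) with
    (LimSup_seq (fun N => INR c / INR p + INR c * / INR (2*N+1))).
  2:{ apply is_LimSup_seq_unique, is_lim_LimSup_seq, lim_aux. }
  apply LimSup_le. exists 0%nat; intros N _.
  apply real_up. apply pos_INR_S. apply lt_0_INR; lia.
  rewrite count_cnt, <- mult_INR, <- plus_INR, <- mult_INR. apply le_INR.
  apply nat_up; auto.
Qed.

Lemma density_exact A p c : (0 < p)%nat -> (forall a, cnt A a p = c) ->
  density A = Finite (INR c / INR p).
Proof.
  intros Hp H. unfold density.
  apply is_LimSup_seq_unique, is_lim_LimSup_seq.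
  apply is_lim_seq_le_le with (fun N => INR c / INR p + (- INR c) * / INR (2*N+1))
                              (fun N => INR c / INR p + INR c * / INR (2*N+1));
   [|apply lim_aux|apply lim_aux].
  intros N; split.
  - apply real_low. apply pos_INR_S. apply lt_0_INR; lia.
    rewrite count_cnt, <- !mult_INR, <- plus_INR. apply le_INR.
    apply nat_low; auto.
  - apply real_up. apply pos_INR_S. apply lt_0_INR; lia.
    rewrite count_cnt, <- mult_INR, <- plus_INR, <- mult_INR. apply le_INR.
    apply nat_up; auto. intros a; rewrite H; lia.
Qed.

Lemma lub_eq (S : nat -> Prop) (v : R) :
  (forall A, independent S A -> Rbar_le (density A) v) ->
  (exists A, independent S A /\ density A = Finite v) ->
  indep_ratio S = Finite v.
Proof.
  intros Hu [A [HA HD]]. unfold indep_ratio. apply Rbar_is_lub_unique. split.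
  - intros x [B [HB <-]]. apply Hu; auto.
  - intros b Hb. apply Hb. exists A; auto.
Qed.
Open Scope nat_scope.

Lemma cnt_zero A a n : (forall d, d < n -> A (a + Z.of_nat d)%Z = false) -> cnt A a n = 0.
Proof.
  revert a; induction n; intros a H; simpl; auto.
  pose proof (H 0 ltac:(lia)) as H0. rewrite Z.add_0_r in H0. rewrite H0.
  rewrite IHn; auto. intros d Hd. replace (a + 1 + Z.of_nat d)%Z with (a + Z.of_nat (S d))%Z by lia.
  apply H; lia.
Qed.

Lemma indep_gap l k A i d :
  independent (fun d => ((1 <= d <= l - 1)%nat \/ d = k)) A -> A i = true ->
  ((1 <= d <= l - 1)%nat \/ d = k) -> A (i + Z.of_nat d)%Z = false.
Proof.
  intros H Hi Hd. destruct (A (i + Z.of_nat d)%Z) eqn:E; auto. exfalso.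
  apply (H _ _ E Hi). replace (i + Z.of_nat d - i)%Z with (Z.of_nat d) by ring.
  rewrite Zabs2Nat.id. auto.
Qed.

Lemma cnt_le1 l k A :
  independent (fun d => ((1 <= d <= l - 1)%nat \/ d = k)) A ->
  forall n a, n <= l -> cnt A a n <= 1.
Proof.
  intros HI n; induction n; intros a Hn; simpl; auto.
  destruct (A a) eqn:E.
  - rewrite cnt_zero; auto. intros d Hd.
    replace (a + 1 + Z.of_nat d)%Z with (a + Z.of_nat (S d))%Z by lia.
    apply (indep_gap l k); auto. lia.
  - simpl. apply IHn; lia.
Qed.

Lemma upper1 l k A : 2 <= l ->
  independent (fun d => ((1 <= d <= l - 1)%nat \/ d = k)) A ->
  Rbar_le (density A) (1 / INR l)%R.
Proof.
  intros Hl HI. replace (1 / INR l)%R with (INR 1 / INR l)%R by reflexivity.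
  apply density_upper. lia. intros a. apply (cnt_le1 l k); auto.
Qed.

Lemma upper2 l k m A : 2 <= l -> k = m * l -> 
  independent (fun d => ((1 <= d <= l - 1)%nat \/ d = k)) A ->
  Rbar_le (density A) (INR m / INR (k+1))%R.
Proof.
  intros Hl Hk HI. apply density_upper. lia. intros a.
  assert (Hw : forall b, cnt A b k <= m).
  { intros b. rewrite Hk. replace m with (m*1) at 2 by lia. apply cnt_mul_le. intros c. apply (cnt_le1 l k); auto. }
  destruct (A a) eqn:E.
  - rewrite cnt_add. simpl. rewrite (indep_gap l k A a k HI E (or_intror eq_refl)).
    specialize (Hw a). lia.
  - replace (k+1) with (1+k) by lia. rewrite cnt_add. simpl. rewrite E.
    specialize (Hw (a+1)%Z). simpl. lia.
Qed.
Open Scope nat_scope.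

Definition B (p l : Z) : Z -> bool := fun i =>
  ((Z.modulo (Z.modulo i p) l =? 0)%Z && (Z.modulo i p + l <=? p)%Z).

Lemma modeq a b q r : (0 <= r < b)%Z -> a = (b*q + r)%Z -> (a mod b = r)%Z.
Proof. intros H E. symmetry. apply Z.mod_unique with q; auto. Qed.

Lemma cnt_periodic A p : (forall i, A (i + Z.of_nat p)%Z = A i) -> forall a, cnt A a p = cnt A 0%Z p.
Proof.
  intros H.
  assert (Hs : forall a, cnt A (a+1)%Z p = cnt A a p).
  { intros a. pose proof (cnt_add A a 1 p) as E1. pose proof (cnt_add A a p 1) as E2.
    replace (1 + p) with (p + 1) in E1 by lia. rewrite E1 in E2. simpl in E2.
    rewrite H in E2. destruct (A a); simpl in E2; lia. }
  intros a. induction a using Z.peano_ind; auto.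
  - unfold Z.succ. rewrite Hs. auto.
  - rewrite <- IHa. rewrite <- (Hs (Z.pred a)). f_equal. lia.
Qed.

Lemma B_shift p l i : (0 < p)%Z -> B p l (i + p) = B p l i.
Proof.
  intros Hp. unfold B. replace (i + p)%Z with (i + 1*p)%Z by ring.
  rewrite Z.mod_add by lia. reflexivity.
Qed.

Lemma B_val p l r : (0 <= r < p)%Z -> B p l r = ((r mod l =? 0)%Z && (r + l <=? p)%Z).
Proof. intros H. unfold B. rewrite (Z.mod_small r p) by auto. reflexivity. Qed.

Lemma cnt_B0 l c s : 2 <= l -> s < l -> 1 <= c ->
  cnt (B (Z.of_nat (c*l+s)) (Z.of_nat l)) 0%Z (c*l+s) = c.
Proof.
  intros Hl Hs Hc. set (p := Z.of_nat (c*l+s)).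
  assert (Hp : p = (Z.of_nat c * Z.of_nat l + Z.of_nat s)%Z) by (unfold p; lia).
  assert (St : forall j, j <= c -> cnt (B p (Z.of_nat l)) 0%Z (j*l) = j).
  { induction j; intros Hj; simpl; auto.
    replace (l + j*l) with (j*l + l) by lia. rewrite cnt_add, IHj by lia.
    replace l with (S (l-1)) at 3 by lia. simpl.
    set (x := Z.of_nat (j*l)).
    assert (Hx : x = (Z.of_nat j * Z.of_nat l)%Z) by (unfold x; lia).
    assert (Hjl : (Z.of_nat j * Z.of_nat l + Z.of_nat l <= Z.of_nat c * Z.of_nat l)%Z) by nia.
    rewrite B_val by nia.
    rewrite (modeq x (Z.of_nat l) (Z.of_nat j) 0) by lia.
    replace ((0 =? 0)%Z && (x + Z.of_nat l <=? p)%Z) with true.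
    2:{ symmetry. apply andb_true_iff; split; [apply Z.eqb_eq|apply Z.leb_le]; lia. }
    rewrite cnt_zero. lia.
    intros d Hd. rewrite B_val by nia.
    rewrite (modeq _ (Z.of_nat l) (Z.of_nat j) (1 + Z.of_nat d)) by lia.
    apply andb_false_iff; left; apply Z.eqb_neq; lia. }
  rewrite cnt_add, St by lia. rewrite cnt_zero. lia.
  intros d Hd. rewrite B_val by nia.
  apply andb_false_iff; right. apply Z.leb_gt. lia.
Qed.

Lemma cnt_B l c s a : 2 <= l -> s < l -> 1 <= c ->
  cnt (B (Z.of_nat (c*l+s)) (Z.of_nat l)) a (c*l+s) = c.
Proof.
  intros. rewrite cnt_periodic. apply cnt_B0; auto.
  intros i. apply B_shift. nia.
Qed.

Lemma indep_of_step (S : nat -> Prop) A :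
  (forall d, S d -> d <> 0) ->
  (forall x d, A x = true -> S d -> A (x + Z.of_nat d)%Z = false) -> independent S A.
Proof.
  intros H0 Hs i j Hi Hj HS.
  destruct (Z_le_gt_dec j i).
  - assert (E : i = (j + Z.of_nat (Z.abs_nat (i-j)))%Z) by (rewrite Nat2Z.inj_abs_nat; lia).
    pose proof (Hs j _ Hj HS) as F. rewrite <- E in F. congruence.
  - assert (E : j = (i + Z.of_nat (Z.abs_nat (i-j)))%Z) by (rewrite Nat2Z.inj_abs_nat; lia).
    pose proof (Hs i _ Hi HS) as F. rewrite <- E in F. congruence.
Qed.

Lemma B_small p l x d : (2 <= l)%Z -> (0 < p)%Z -> B p l x = true -> (1 <= d <= l - 1)%Z ->
  B p l (x + d) = false.
Proof.
  intros Hl Hp Hx Hd. unfold B in *. apply andb_true_iff in Hx as [H1 H2].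
  apply Z.eqb_eq in H1. apply Z.leb_le in H2.
  pose proof (Z.mod_pos_bound x p Hp). pose proof (Z.div_mod x p ltac:(lia)).
  pose proof (Z.div_mod (x mod p) l ltac:(lia)).
  set (r := (x mod p)%Z) in *.
  rewrite (modeq (x + d) p (x / p) (r + d)) by lia.
  rewrite (modeq (r + d) l (r / l) d) by lia.
  apply andb_false_iff; left; apply Z.eqb_neq; lia.
Qed.
Open Scope nat_scope.

Lemma step1 l k x : 2 <= l -> k mod l <> 0 ->
  B (Z.of_nat (1*l+0)) (Z.of_nat l) x = true ->
  B (Z.of_nat (1*l+0)) (Z.of_nat l) (x + Z.of_nat k)%Z = false.
Proof.
  intros Hl Hk Hx. replace (1*l+0) with l in * by lia.
  unfold B in *. apply andb_true_iff in Hx as [H1 H2].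
  apply Z.eqb_eq in H1. apply Z.leb_le in H2.
  set (L := Z.of_nat l) in *.
  assert (HL : (0 < L)%Z) by (unfold L; lia).
  pose proof (Z.mod_pos_bound x L HL). pose proof (Z.div_mod x L ltac:(lia)).
  rewrite Z.mod_mod in H1 by lia.
  rewrite Z.mod_mod by lia.
  replace (x + Z.of_nat k)%Z with (Z.of_nat k + (x / L) * L)%Z by lia.
  rewrite Z.mod_add by lia.
  pose proof (Nat2Z.inj_mod k l). fold L in H3.
  apply andb_false_iff; left; apply Z.eqb_neq. lia.
Qed.

Lemma step2 l m x : 2 <= l -> 1 <= m ->
  B (Z.of_nat (m*l+1)) (Z.of_nat l) x = true ->
  B (Z.of_nat (m*l+1)) (Z.of_nat l) (x + Z.of_nat (m*l))%Z = false.
Proof.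
  intros Hl Hm Hx.
  unfold B in *. apply andb_true_iff in Hx as [H1 H2].
  apply Z.eqb_eq in H1. apply Z.leb_le in H2.
  set (L := Z.of_nat l) in *. set (P := Z.of_nat (m*l+1)) in *.
  assert (HP : P = (Z.of_nat (m*l) + 1)%Z) by (unfold P; lia).
  assert (HL : (2 <= L)%Z) by (unfold L; lia).
  assert (HK : (L <= Z.of_nat (m*l))%Z) by (unfold L; nia).
  pose proof (Z.mod_pos_bound x P ltac:(lia)). pose proof (Z.div_mod x P ltac:(lia)).
  pose proof (Z.div_mod (x mod P) L ltac:(lia)).
  set (r := (x mod P)%Z) in *.
  destruct (Z.eq_dec r 0) as [E|E].
  - rewrite (modeq (x + Z.of_nat (m*l)) P (x / P) (Z.of_nat (m*l))) by lia.
    apply andb_false_iff; right. apply Z.leb_gt. lia.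
  - rewrite (modeq (x + Z.of_nat (m*l)) P (x / P + 1) (r - 1)) by lia.
    assert (T : (1 <= r / L)%Z) by nia.
    rewrite (modeq (r - 1) L (r / L - 1) (L - 1)) by lia.
    apply andb_false_iff; left; apply Z.eqb_neq. lia.
Qed.

Open Scope R_scope.

Theorem theorem22 (l k : nat) (hl : (2 <= l)%nat) (hk : (l < k)%nat) :
  ((k mod l <> 0)%nat ->
     indep_ratio (fun d => ((1 <= d <= l - 1)%nat \/ d = k)) = Finite (1 / INR l)) /\
  ((k mod l = 0)%nat ->
     indep_ratio (fun d => ((1 <= d <= l - 1)%nat \/ d = k))
       = Finite (INR k / (INR l * INR (k + 1)))).
Proof.
  split; intros Hm.
  - apply lub_eq.
    + intros A HA. apply (upper1 l k A hl HA).
    + exists (B (Z.of_nat (1*l+0)) (Z.of_nat l)). split.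
      * apply indep_of_step.
        { intros d [Hd|Hd]; lia. }
        intros x d Hx [Hd|Hd].
        -- apply B_small; auto; lia.
        -- subst d. apply step1; auto.
      * rewrite (density_exact _ (1*l+0) 1); [| lia |].
        -- f_equal. replace (1*l+0)%nat with l by lia. reflexivity.
        -- intros a. apply cnt_B; lia.
  - set (m := (k / l)%nat).
    assert (Hk : k = (m * l)%nat).
    { pose proof (Nat.div_mod k l ltac:(lia)). unfold m. lia. }
    assert (Hm1 : (1 <= m)%nat) by nia.
    assert (Hv : INR k / (INR l * INR (k + 1)) = INR m / INR (k+1)).
    { rewrite Hk, mult_INR. field. split; apply not_0_INR; lia. }
    rewrite Hv. apply lub_eq.
    + intros A HA. apply (upper2 l k m A hl Hk HA).
    + exists (B (Z.of_nat (m*l+1)) (Z.of_nat l)). split.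
      * apply indep_of_step.
        { intros d [Hd|Hd]; lia. }
        intros x d Hx [Hd|Hd].
        -- apply B_small; auto; lia.
        -- subst d. rewrite Hk. apply step2; auto.
      * rewrite (density_exact _ (m*l+1) m); [| lia |].
        -- f_equal. rewrite Hk. reflexivity.
        -- intros a. apply cnt_B; lia.
Qed.
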